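(* The following statements are equivalent: (1) $\omega_1<\mathfrak d$; (2) every $T_1$ space of cardinality $\omega_1$ having countable extent is set strongly star Menger.
   Context: For a family $\mathcal U$ of subsets of $X$ and $A\subseteq X$, $st(A,\mathcal U)=\bigcup\{U\in\mathcal U: U\cap A\neq\emptyset\}$. $X$ is set strongly star Menger if for every nonempty $A\subseteq X$ and every sequence $(\mathcal U_n:n\in\omega)$ of families of open sets with $\overline A\subseteq\bigcup\mathcal U_n$ for all $n$, there are finite $F_n\subseteq\overline A$ with $A\subseteq\bigcup_n st(F_n,\mathcal U_n)$. A space has countable extent if every closed discrete subset is countable. $\mathfrak d$ is the minimal cardinality of a cofinal subset of $(\omega^\omega,\leq^* )$. *)

(* Defs.v *)
From HB Require Import structures.
From mathcomp Require Import all_boot all_order.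
From mathcomp Require Import boolp classical_sets functions cardinality.
From mathcomp Require Import topology.
Set Implicit Arguments. Unset Strict Implicit. Unset Printing Implicit Defensive.
Local Open Scope classical_set_scope.

(* |A| <= omega_1 : A carries a strict well-order all of whose proper
   initial segments are countable (i.e. of order type <= omega_1). *)
Definition card_le_omega1 {T : Type} (A : set T) : Prop :=
  exists R : T -> T -> Prop,
    (forall x, A x -> ~ R x x) /\
    (forall x y z, A x -> A y -> A z -> R x y -> R y z -> R x z) /\
    (forall x y, A x -> A y -> x <> y -> R x y \/ R y x) /\
    (forall B : set T, B `<=` A -> B !=set0 ->
        exists2 m, B m & forall y, B y -> ~ R y m) /\
    (forall x, A x -> countable [set y | A y /\ R y x]).

Definition card_eq_omega1 {T : Type} (A : set T) : Prop :=
  card_le_omega1 A /\ ~ countable A.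

Definition le_star (g f : nat -> nat) : Prop :=
  exists N, forall n, (N <= n)%N -> (g n <= f n)%N.

Definition cofinal_family (D : set (nat -> nat)) : Prop :=
  forall g, exists2 f, D f & le_star g f.

(* omega_1 < d : no cofinal family has cardinality <= omega_1 *)
Definition omega1_lt_dominating : Prop :=
  forall D : set (nat -> nat), cofinal_family D -> ~ card_le_omega1 D.

Definition closed_discrete {T : topologicalType} (A : set T) : Prop :=
  closed A /\
  (forall x, A x -> exists U : set T, open U /\ U x /\ U `&` A = [set x]).

Definition countable_extent (T : topologicalType) : Prop :=
  forall A : set T, closed_discrete A -> countable A.

Definition star {T : Type} (A : set T) (U : set (set T)) : set T :=
  [set x | exists V, U V /\ V `&` A !=set0 /\ V x].

Definition set_strongly_star_Menger (T : topologicalType) : Prop :=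
  forall A : set T, A !=set0 ->
  forall Us : nat -> set (set T),
    (forall n V, Us n V -> open V) ->
    (forall n, closure A `<=` \bigcup_(V in Us n) V) ->
    exists F : nat -> set T,
      (forall n, finite_set (F n) /\ F n `<=` closure A) /\
      A `<=` \bigcup_n star (F n) (Us n).

(* Main.v *)
From HB Require Import structures.
Require Import Defs.
From mathcomp Require Import all_boot boolp classical_sets cardinality topology.
Set Implicit Arguments. Unset Strict Implicit. Unset Printing Implicit Defensive.
Local Open Scope classical_set_scope.

Lemma countableU2 T (A B : set T) : countable A -> countable B -> countable (A `|` B).
Proof.
move=> cA cB.
have -> : A `|` B = \bigcup_(i in [set: bool]) (if i then A else B).
  apply/seteqP; split=> x.
    by case=> h; [exists true | exists false].
  by case=> -[] _ h; [left|right].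
by apply: bigcup_countable => // -[].
Qed.

Lemma nat_min (P : set nat) : P !=set0 -> exists2 k, P k & forall j, P j -> (k <= j)%N.
Proof.
move=> [n Pn].
have ex : exists n, `[< P n >] by exists n; apply/asboolP.
case: (ex_minnP ex) => k /asboolP Pk kmin.
by exists k => // j Pj; apply: kmin; apply/asboolP.
Qed.

Lemma cle1_inj {S T : Type} (A : set S) (B : set T) (psi : T -> S) :
  (forall x y, B x -> B y -> psi x = psi y -> x = y) ->
  (forall x, B x -> A (psi x)) -> card_le_omega1 A -> card_le_omega1 B.
Proof.
move=> inj BA [R [Rirr [Rtr [Rtot [Rmin Rcnt]]]]].
exists (fun x y => R (psi x) (psi y)); split; [|split; [|split; [|split]]].
- by move=> x Bx; apply: Rirr; apply: BA.
- by move=> x y z Bx By Bz; apply: Rtr; apply: BA.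
- move=> x y Bx By xy; apply: Rtot; try exact: BA.
  by move=> /(inj _ _ Bx By).
- move=> B' B'B [b B'b].
  have sub : psi @` B' `<=` A by move=> _ [y B'y <-]; apply/BA/B'B.
  have ne : psi @` B' !=set0 by exists (psi b); exists b.
  have [m [b' B'b' <-] mmin] := Rmin _ sub ne.
  by exists b' => // y B'y; apply: mmin; exists y.
- move=> x Bx; have /countable_injP[f finj] := Rcnt _ (BA _ Bx).
  apply/countable_injP; exists (f \o psi) => y z; rewrite !inE => -[By Ry] [Bz Rz] /= e.
  apply: inj => //; apply: finj => //; rewrite inE; split => //; exact: BA.
Qed.

Lemma cle1_X {S : Type} (A : set S) : card_le_omega1 A -> card_le_omega1 (A `*` [set: nat]).
Proof.
move=> [R [Rirr [Rtr [Rtot [Rmin Rcnt]]]]].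
exists (fun p q => R p.1 q.1 \/ (p.1 = q.1 /\ (p.2 < q.2)%N)).
split; [|split; [|split; [|split]]].
- move=> [p1 p2] [/= Ap _] [/(Rirr _ Ap)//|[_]]; by rewrite ltnn.
- move=> [x1 x2] [y1 y2] [z1 z2] [/= Ax _] [/= Ay _] [/= Az _] /=.
  case=> [Rxy|[exy lxy]] [Ryz|[eyz lyz]].
  + by left; apply: (Rtr x1 y1 z1).
  + by left; rewrite -eyz.
  + by left; rewrite exy.
  + by right; split; [congruence|exact: ltn_trans lyz].
- move=> [x1 x2] [y1 y2] [/= Ax _] [/= Ay _] /= xy.
  case: (EM (x1 = y1)) => e.
    subst y1; case: (ltngtP x2 y2) => h.
    + by left; right.
    + by right; right.
    + by subst.
  by case: (Rtot _ _ Ax Ay e) => h; [left; left|right; left].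
- move=> B BA [b Bb].
  have sub : fst @` B `<=` A by move=> _ [y By <-]; case: (BA _ By).
  have ne : fst @` B !=set0 by exists b.1; exists b.
  have [m [b' Bb' <-] mmin] := Rmin _ sub ne.
  have ne2 : [set k | B (b'.1, k)] !=set0 by exists b'.2; case: b' Bb' {mmin}.
  have [k Bk kmin] := nat_min ne2.
  exists (b'.1, k) => // -[y1 y2] By /= [Ry|[ey ly]].
    by apply: (mmin y1) => //; exists (y1, y2).
  subst y1; have := kmin _ By; by rewrite leqNgt ly.
- move=> [p1 p2] [/= Ap _].
  apply: (@sub_countable _ _ _ (([set a | A a /\ R a p1] `|` [set p1]) `*` [set: nat])).
    apply: subset_card_le => -[y1 y2] /= [[Ay _] [Ry|[ey _]]]; split=> //.
      by left.
    by right.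
  apply: countableX => //; apply: countableU2 => //; exact: Rcnt.
Qed.

Definition sepU {T : Type} (U : set (set T)) (D : set T) :=
  forall a b, D a -> D b -> (exists V, U V /\ V a /\ V b) -> a = b.

Lemma maximal_sep {T : Type} (C : set T) (U : set (set T)) :
  C `<=` \bigcup_(V in U) V ->
  exists D, D `<=` C /\ sepU U D /\ C `<=` star D U.
Proof.
move=> cov.
have [|D [[DC Dsep] Dmax]] := @Zorn_bigcup T (fun D => D `<=` C /\ sepU U D).
  move=> F FP Ftot; split.
    by move=> x [X FX Xx]; have [+ _] := FP _ FX; apply.
  move=> a b [X FX Xa] [Y FY Yb] hV.
  have [XY|YX] := Ftot _ _ FX FY.
    by have [_ +] := FP _ FY; apply => //; apply: XY.
  by have [_ +] := FP _ FX; apply => //; apply: YX.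
exists D; split=> //; split=> // x Cx.
have [V UV Vx] := cov _ Cx.
case: (EM (star D U x)) => // nst.
case: (EM (D x)) => Dx.
  by exfalso; apply: nst; exists V; split=> //; split=> //; exists x.
exfalso; apply: (Dmax (D `|` [set x])).
  split; first by move=> y Dy; left.
  by move=> /(_ x (or_intror erefl)).
split.
  by move=> y [/DC|->].
move=> a b [Da|->] [Db|->] [W [UW [Wa Wb]]] //.
- by apply: Dsep => //; exists W.
- by exfalso; apply: nst; exists W; split=> //; split=> //; exists a.
- by exfalso; apply: nst; exists W; split=> //; split=> //; exists b.
Qed.

Lemma sep_closed_discrete (T : topologicalType) (C : set T) (U : set (set T)) D :
  accessible_space T -> closed C -> (forall V, U V -> open V) ->
  C `<=` \bigcup_(V in U) V -> D `<=` C -> sepU U D -> closed_discrete D.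
Proof.
move=> T1 clC opU cov DC Dsep; split.
  move=> x clx; case: (EM (D x)) => // Dx; exfalso.
  case: (EM (C x)) => Cx.
    have [V UV Vx] := cov _ Cx.
    have nV : nbhs x V by apply: open_nbhs_nbhs; split=> //; apply: opU.
    have [d [Dd Vd]] := clx _ nV.
    have dx : x != d by apply/eqP => e; apply: Dx; rewrite e.
    have [W [oW xW dW]] := T1 _ _ dx.
    have nW : nbhs x W by apply: open_nbhs_nbhs; split=> //; rewrite -inE.
    have [d' [Dd' [Vd' Wd']]] := clx _ (filterI nV nW).
    have e : d' = d by apply: Dsep => //; exists V.
    by move: dW; rewrite inE /= -e.
  have nC : nbhs x (~` C).
    by apply: open_nbhs_nbhs; split=> //; rewrite openC.
  by have [d [Dd nCd]] := clx _ nC; apply: nCd; apply: DC.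
move=> x Dx; have [V UV Vx] := cov _ (DC _ Dx).
exists V; split; first exact: opU.
split=> //; apply/seteqP; split=> y.
  by move=> [Vy Dy]; apply: Dsep => //; exists V.
by move=> ->.
Qed.

Lemma forward : omega1_lt_dominating -> forall T : topologicalType,
  accessible_space T -> card_eq_omega1 [set: T] -> countable_extent T ->
  set_strongly_star_Menger T.
Proof.
move=> hd T T1 [cardT _] ext A [x0 Ax0] Us opU cov.
have clC : closed (closure A) by exact: closed_closure.
have hD n : exists D, D `<=` closure A /\ sepU (Us n) D /\ closure A `<=` star D (Us n).
  exact: maximal_sep (cov n).
have [Dn hDn] := choice hD.
have cntD n : countable (Dn n).
  have [DC [Dsep _]] := hDn n.
  exact: ext _ (sep_closed_discrete T1 clC (opU n) (cov n) DC Dsep).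
have hc n : exists c : T -> nat, {in Dn n &, injective c}.
  exact/countable_injP.
have [code hcode] := choice hc.
have pk (xn : T * nat) : exists d, A xn.1 ->
    Dn xn.2 d /\ exists V, Us xn.2 V /\ V d /\ V xn.1.
  case: (EM (A xn.1)) => Ax; last by exists x0.
  have [_ [_ st]] := hDn xn.2.
  have [V [UV [[d [Vd Dd]] Vx]]] := st _ (subset_closure Ax).
  by exists d => _; split=> //; exists V.
have [dd hdd] := choice pk.
pose h x n := code n (dd (x, n)).
have ps (f : nat -> nat) : exists x, (h @` A) f -> A x /\ h x = f.
  case: (EM ((h @` A) f)) => [[x Ax <-]|]; last by exists x0.
  by exists x.
have [sec hsec] := choice ps.
have cardH : card_le_omega1 (h @` A).
  apply: (cle1_inj (psi := sec)) (cardT) => //.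
  move=> f1 f2 H1 H2 e.
  by have [_ <-] := hsec _ H1; have [_ <-] := hsec _ H2; rewrite e.
have [g hg] : exists g, forall f, (h @` A) f -> ~ le_star g f.
  case: (EM (exists g, forall f, (h @` A) f -> ~ le_star g f)) => // nex.
  exfalso; apply: (hd _ _ cardH) => g.
  case: (EM (exists2 f, (h @` A) f & le_star g f)) => // nf.
  by exfalso; apply: nex; exists g => f Hf lf; apply: nf; exists f.
have psk (nk : nat * nat) : exists d, (exists d', Dn nk.1 d' /\ code nk.1 d' = nk.2) ->
    Dn nk.1 d /\ code nk.1 d = nk.2.
  case: (EM (exists d', Dn nk.1 d' /\ code nk.1 d' = nk.2)) => [[d hd']|]; last by exists x0.
  by exists d.
have [s hs] := choice psk.
exists (fun n => [set d | Dn n d /\ (code n d <= g n)%N]); split.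
  move=> n; split; last by move=> d [Dd _]; have [+ _] := hDn n; apply.
  apply: (@sub_finite_set _ _ ((fun k => s (n, k)) @` `I_(g n).+1)); last first.
    exact: finite_image.
  move=> d [Dd le]; exists (code n d) => //=.
  have [Ds cs] := hs (n, code n d) (ex_intro _ d (conj Dd erefl)).
  by apply: (hcode n) => //; rewrite inE.
move=> x Ax.
have nle := hg (h x) (ex_intro2 _ _ x Ax erefl).
have [n ltn] : exists n, (h x n < g n)%N.
  case: (EM (exists n, (h x n < g n)%N)) => // nex; exfalso; apply: nle.
  exists 0%N => n _; rewrite leqNgt; apply/negP => lt; apply: nex; exists n.
  by [].
exists n => //.
have [Dd [V [UV [Vd Vx]]]] := hdd (x, n) Ax.
exists V; split=> //; split=> //; exists (dd (x, n)); split=> //; split=> //.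
exact: ltnW.
Qed.

Record ST (D : set (nat -> nat)) := MkST { st1 : nat -> nat; st2 : nat; stD : D st1 }.

HB.instance Definition _ D := gen_eqMixin (ST D).
HB.instance Definition _ D := gen_choiceMixin (ST D).

Definition enc D (p : ST D) (n : nat) : nat :=
  match n with 0 => st2 p | m.+1 => st1 p m + st2 p end.

Definition cyl D (p : ST D) (n : nat) : set (ST D) :=
  [set q | forall i, (i < n)%N -> enc q i = enc p i].

Definition opST D (U : set (ST D)) : Prop :=
  forall p, U p -> exists n, cyl p n `<=` U.

Lemma opST_T D : opST [set: ST D].
Proof. by move=> p _; exists 0%N. Qed.

Lemma opST_I D : setI_closed (@opST D).
Proof.
move=> U V oU oV p [Up Vp].
have [n hn] := oU _ Up; have [m hm] := oV _ Vp.
exists (maxn n m) => q hq; split.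
  by apply: hn => i lt; apply: hq; rewrite leq_max lt.
by apply: hm => i lt; apply: hq; rewrite leq_max lt orbT.
Qed.

Lemma opST_U D (I : Type) (f : I -> set (ST D)) :
  (forall i, opST (f i)) -> opST (\bigcup_i f i).
Proof.
move=> hf p [i _ fip]; have [n hn] := hf i _ fip.
by exists n => q /hn fq; exists i.
Qed.

HB.instance Definition _ D := isOpenTopological.Build (ST D)
  (@opST_T D) (@opST_I D) (@opST_U D).

Lemma openST D (U : set (ST D)) : open U = opST U.
Proof. by []. Qed.

Lemma enc_inj D (p q : ST D) : (forall i, enc p i = enc q i) -> p = q.
Proof.
case: p => f1 k1 D1; case: q => f2 k2 D2 /= h.
have ek : k1 = k2 by exact: (h 0%N).
subst k2.
have ef : f1 = f2.
  by apply: funext => m; have := h m.+1; rewrite /= => /addIn.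
subst f2; congr MkST; exact: Prop_irrelevance.
Qed.

Lemma cyl_open D (p : ST D) n : open (cyl p n).
Proof.
rewrite openST => q hq; exists n => r hr i lt.
by rewrite hr // hq.
Qed.

Lemma ST_T1 D : accessible_space (ST D).
Proof.
move=> x y /eqP xy.
have [i hi] : exists i, enc x i <> enc y i.
  case: (EM (exists i, enc x i <> enc y i)) => // nex; exfalso; apply: xy.
  apply: enc_inj => i; case: (EM (enc x i = enc y i)) => // ne.
  by exfalso; apply: nex; exists i.
exists (cyl x i.+1); split; first exact: cyl_open.
  by rewrite inE.
rewrite inE => /(_ i (ltnSn i)) e; by apply: hi.
Qed.

Lemma ST_ext D : countable_extent (ST D).
Proof.
move=> A [_ disc].
have hn (a : ST D) : exists n : nat, A a -> forall b, A b -> cyl a n b -> b = a.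
  case: (EM (A a)) => Aa; last by exists 0%N.
  have [U [oU [Ua UA]]] := disc a Aa.
  have [n hn] := (oU : opST U) a Ua.
  exists n => _ b Ab cb.
  have : (U `&` A) b by split=> //; apply: hn.
  by rewrite UA.
have [nn hnn] := choice hn.
apply/countable_injP.
exists (fun a => pickle (nn a, mkseq (enc a) (nn a))) => a b.
rewrite !inE => Aa Ab /(pcan_inj pickleK_inv) [en es].
symmetry; apply: (hnn a Aa b Ab) => i lt.
have := congr1 (fun s => nth 0%N s i) es.
rewrite /= nth_mkseq // nth_mkseq; last by rewrite -en.
by move=> ->.
Qed.

Lemma ST_big D : cofinal_family D -> forall G : nat -> nat,
  exists p : ST D, forall n, (G n < enc p n.+1)%N.
Proof.
move=> cof G.
have [f Df [N hN]] := cof (fun n => (G n).+1).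
exists (MkST ((\max_(i < N) G i).+1) Df) => n /=.
case: (ltnP n N) => nN.
  have := @leq_bigmax _ (fun i : 'I_N => G i) (Ordinal nN) => /= le.
  by rewrite ltn_addl // ltnS.
have := hN n nN => le.
by apply: leq_trans le _; rewrite leq_addr.
Qed.

Lemma ST_card D : cofinal_family D -> card_le_omega1 D -> card_eq_omega1 [set: ST D].
Proof.
move=> cof cD; split.
  apply: (cle1_inj (A := D `*` [set: nat]) (psi := fun p => (st1 p, st2 p))) (cle1_X cD).
    move=> [f1 k1 D1] [f2 k2 D2] _ _ [/= e1 e2]; subst.
    congr MkST; exact: Prop_irrelevance.
  by move=> p _; split => //; exact: stD.
move=> /countable_injP [c cinj].
have hg n : exists m, forall x : ST D, c x = n -> enc x n.+1 = m.
  case: (EM (exists x : ST D, c x = n)) => [[x cx]|nex].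
    exists (enc x n.+1) => y cy.
    by have -> // : y = x by apply: cinj; rewrite ?inE // cx cy.
  by exists 0%N => y cy; exfalso; apply: nex; exists y.
have [G hG] := choice hg.
have [p hp] := ST_big cof G.
by have := hp (c p); rewrite (hG _ p erefl) ltnn.
Qed.

Lemma ST_notSSM D : cofinal_family D -> ~ set_strongly_star_Menger (ST D).
Proof.
move=> cof ssm.
have [p0 _] := ST_big cof (fun _ => 0%N).
pose Us n := [set V : set (ST D) | exists k, V = [set q | enc q n.+1 = k]].
have [||F [hF cover]] := ssm [set: ST D] (ex_intro _ p0 I) Us.
- move=> n V [k ->]; rewrite openST => p hp; exists n.+2 => q hq.
  exact: (eq_trans (hq n.+1 (ltnSn _)) hp).
- move=> n x _; exists [set q | enc q n.+1 = enc x n.+1] => //.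
  by exists (enc x n.+1).
have hb n : exists M, forall h, F n h -> (enc h n.+1 <= M)%N.
  have [X eX] := finite_fsetP.1 (hF n).1.
  exists (\max_(h <- finmap.enum_fset X) enc h n.+1) => h Fh.
  by apply: leq_bigmax_seq => //; rewrite eX in Fh.
have [G hG] := choice hb.
have [p hp] := ST_big cof G.
have [n _ [V [[k ->] [[h [hk Fh]] pk]]]] := cover p I.
have hk' : enc h n.+1 = k := hk.
have pk' : enc p n.+1 = k := pk.
have := hG n h Fh; rewrite hk' -pk' => le.
by have := hp n; rewrite ltnNge le.
Qed.

Theorem corollary2p2 :
  omega1_lt_dominating <->
  (forall T : topologicalType,
      accessible_space T ->
      card_eq_omega1 [set: T] ->
      countable_extent T ->
      set_strongly_star_Menger T).
Proof.
split; first exact: forward.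
move=> h D cof cD.
exact: (ST_notSSM cof (h _ (@ST_T1 D) (ST_card cof cD) (@ST_ext D))).
Qed.
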